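(* For the Diverse Population-Based EA on the weighted vertex cover problem with $n$ vertices, a solution $x$ with the two properties (1) $LP(x)=LP(0^n)-Cost(x)$ and (2) there is an optimal solution of the LP for $G(x)$ which assigns $1/2$ to each non-isolated vertex of $G(x)$, is included in the population in expected time $O(n^3)$.
   Context: Weighted vertex cover: $G=(V,E)$, $V=\{v_1,\dots,v_n\}$, $w:V\to\mathbb{N}^+$. Search points $x\in\{0,1\}^n$ ($v_i$ selected iff $x_i=1$); $|x|_1$ is the number of ones. $Cost(x)=\sum_i w(v_i)x_i$; $G(x)=(V(x),E(x))$ with $V(x)=V\setminus\{v_i:x_i=1\}$, $E(x)$ = edges with no selected endpoint. The LP for $G(x)$: minimize $\sum_{v_i\in V(x)}w(v_i)y_i$ s.t. $y_i+y_j\ge1$ for $\{v_i,v_j\}\in E(x)$, $0\le y_i\le1$; $LP(x)$ is its optimal value. Alternative mutation operator on $x$: choose $b\in\{0,1\}$ uniformly; if $b=1$, flip each $x_i$ with probability $1/2$ if $v_i$ is incident to an edge of $E(x)$ and with probability $1/n$ otherwise; if $b=0$, flip each bit independently with probability $1/n$. Diverse Population-Based EA: start with uniformly random $x$, $P=\{x\}$. Each iteration: choose $x\in P$ uniformly; create $x'$ by the alternative mutation operator; add $x'$ to $P$; let $P'=\{y\in P:|y|_1=|x'|_1\}$; let $y_{min_1}\in P'$ minimize $Cost(z)+LP(z)$ and $y_{min_2}\in P'$ minimize $Cost(z)+2LP(z)$ over $P'$; set $P\leftarrow(P\setminus P')\cup\{y_{min_1},y_{min_2}\}$. Time = number of iterations.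 *)

(* Defs.v *)
From HB Require Import structures.
From mathcomp Require Import all_boot all_order all_algebra.
From mathcomp Require Import boolp classical_sets reals.
Set Implicit Arguments. Unset Strict Implicit. Unset Printing Implicit Defensive.
Import Order.TTheory GRing.Theory Num.Theory.
Local Open Scope ring_scope.

Definition bs (n : nat) := {ffun 'I_n -> bool}.
Definition zero_bs (n : nat) : bs n := [ffun => false].

Definition ones n (x : bs n) : nat := (\sum_(i < n) (x i : nat))%N.

Section VC.
Variables (R : realType) (n : nat) (e : rel 'I_n) (w : 'I_n -> nat).

Definition cost (x : bs n) : R := \sum_(i < n) (if x i then (w i)%:R else 0).

(* {v_i,v_j} is an edge of E(x): an edge with no selected endpoint *)
Definition uncov_edge (x : bs n) (i j : 'I_n) : bool := [&& e i j, ~~ x i & ~~ x j].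

(* v_i is incident to an edge of E(x) (= non-isolated vertex of G(x)) *)
Definition nonisolated (x : bs n) (i : 'I_n) : bool := [exists j, uncov_edge x i j].

(* LP for G(x): variables y_i for v_i in V(x) (other coordinates are ignored) *)
Definition lp_feasible (x : bs n) (y : 'I_n -> R) : Prop :=
  (forall i, ~~ x i -> 0 <= y i <= 1) /\
  (forall i j, uncov_edge x i j -> 1 <= y i + y j).

Definition lp_obj (x : bs n) (y : 'I_n -> R) : R :=
  \sum_(i < n | ~~ x i) (w i)%:R * y i.

Definition LP (x : bs n) : R :=
  inf [set v | exists y, lp_feasible x y /\ v = lp_obj x y].

Definition prop1 (x : bs n) : Prop := LP x = LP (zero_bs n) - cost x.

Definition prop2 (x : bs n) : Prop :=
  exists y, [/\ lp_feasible x y, lp_obj x y = LP x &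
                forall i, ~~ x i -> nonisolated x i -> y i = 1 / 2].

Definition target (P : {set bs n}) : Prop :=
  exists x, [/\ x \in P, prop1 x & prop2 x].

Definition bitprob (p : R) (flip : bool) : R := if flip then p else 1 - p.
Definition flip_p (x : bs n) (i : 'I_n) : R :=
  if nonisolated x i then 1 / 2 else 1 / n%:R.
Definition mut_prob (x x' : bs n) : R :=
  1 / 2 * \prod_(i < n) bitprob (flip_p x i) (x i != x' i) +
  1 / 2 * \prod_(i < n) bitprob (1 / n%:R) (x i != x' i).

Definition f1 (x : bs n) : R := cost x + LP x.
Definition f2 (x : bs n) : R := cost x + 2 * LP x.

(* a (deterministic, otherwise arbitrary) tie-breaking rule selecting a
   minimizer of f in every nonempty set *)
Definition argmin_picker (f : bs n -> R) (pick : {set bs n} -> bs n) : Prop :=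
  forall S : {set bs n}, S != finset.set0 ->
    pick S \in S /\ forall y, y \in S -> f (pick S) <= f y.

Variables (pick1 pick2 : {set bs n} -> bs n).

Definition step (P : {set bs n}) (x' : bs n) : {set bs n} :=
  let P1 := x' |: P in
  let P' := finset.finset (fun y => (y \in P1) && (ones y == ones x')) in
  (P1 :\: P') :|: [set pick1 P'; pick2 P'].

Definition trans (P Q : {set bs n}) : R :=
  \sum_(x in P) \sum_(x' : bs n)
     (#|P|%:R)^-1 * mut_prob x x' * (step P x' == Q)%:R.

Definition init (P : {set bs n}) : R :=
  \sum_(x : bs n) (2 ^ n)%:R^-1 * (P == [set x])%:R.

(* surv t P = Pr[population after t iterations is P and the target was
   not reached at iterations 0..t] *)
Fixpoint surv (t : nat) (P : {set bs n}) : R :=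
  if `[< target P >] then 0 else
  match t with
  | O => init P
  | t'.+1 => \sum_(Q : {set bs n}) surv t' Q * trans Q P
  end.

(* sum_{t<N} Pr[T > t]; E[T] = sup_N of this *)
Definition partial_exp_time (N : nat) : R :=
  \sum_(t < N) \sum_(P : {set bs n}) surv t P.

End VC.

(* Main.v *)
Require Import Defs.
From HB Require Import structures.
From mathcomp Require Import all_boot all_order all_algebra.
From mathcomp Require Import boolp classical_sets reals.
Import Order.TTheory GRing.Theory Num.Theory.
Local Open Scope ring_scope.
From mathcomp Require Import ring lra zify.
From Stdlib Require Import Lia.
Set Implicit Arguments. Unset Strict Implicit. Unset Printing Implicit Defensive.

Section LPth.
Variables (R : realType) (n : nat) (e : rel 'I_n) (w : 'I_n -> nat).

Definition halfint (x : bs n) (y : 'I_n -> R) :=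
  forall i, ~~ x i -> y i = 0 \/ y i = 1/2 \/ y i = 1.

Definition frac (x : bs n) (y : 'I_n -> R) i :=
  [&& ~~ x i, 0 < y i, y i < 1 & y i != 1/2].

Lemma nonfrac_val (x : bs n) (y : 'I_n -> R) (i : 'I_n) : ~~ x i -> 0 <= y i <= 1 -> ~~ frac x y i ->
  y i = 0 \/ y i = 1/2 \/ y i = 1.
Proof.
move=> xi /andP[h0 h1]; rewrite /frac xi /=.
case: (ltrP 0 (y i)) => //= h2; last by left; apply/eqP; rewrite eq_le h2 h0.
case: (ltrP (y i) 1) => //= h3; last by right; right; apply/eqP; rewrite eq_le h1 h3.
by move/negPn/eqP => ->; right; left.
Qed.

Lemma round_step (x : bs n) (y : 'I_n -> R) : lp_feasible e x y -> (0 < #|[set i | frac x y i]|)%N ->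
  exists y2, [/\ lp_feasible e x y2, lp_obj w x y2 <= lp_obj w x y &
     (#|[set i | frac x y2 i]| < #|[set i | frac x y i]|)%N].
Proof.
move=> [fb fe] /card_gt0P [j0]; rewrite inE => fj0.
pose lo i := frac x y i && (y i < 1/2).
pose hi i := frac x y i && (1/2 < y i).
pose Wd := \sum_(i < n | ~~ x i) (w i)%:R * ((hi i)%:R - (lo i)%:R) : R.
have [b bE] : exists b, b = (Wd <= 0) by exists (Wd <= 0).
pose s : R := if b then 1 else -1.
pose d i : R := if b then (if y i < 1/2 then y i else 1 - y i)
                else (if y i < 1/2 then 1/2 - y i else y i - 1/2).
case: (arg_minP d fj0) => i0 fi0 Hmin.
pose del := d i0.
have dpos i : frac x y i -> 0 < d i.
  case/and4P=> _ h0 h1 /negP h2; rewrite /d.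
  case: (boolP b) => [bb|/negbTE bb]; rewrite ?bb; case: ifP => h3; try lra.
have dle i : frac x y i -> del <= d i by move/Hmin.
have delpos : 0 < del by apply: dpos.
pose y2 i := y i + s * del * ((hi i)%:R - (lo i)%:R).
exists y2.
have cls i : ~~ x i ->
  [\/ [/\ lo i, 0 < y i < 1/2, y2 i = y i - s * del & del <= d i],
      [/\ hi i, 1/2 < y i < 1, y2 i = y i + s * del & del <= d i] |
      [/\ y2 i = y i & (y i = 0 \/ y i = 1/2 \/ y i = 1)]].
  move=> xi.
  case fi: (frac x y i).
    move: (fi) => /and4P[_ h0 h1 /negP h2].
    case: (ltrP (y i) (1/2)) => h3.
      constructor 1; split => //.
      - by rewrite /lo fi ?h3.
      - by rewrite h0 ?h3.
      - by rewrite /y2 /hi /lo fi ?h3 /=; case: ltrP => /= h4; try lra.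
      - by apply: dle.
    have h4 : 1/2 < y i.
      rewrite lt_neqAle h3 andbT; apply/negP => /eqP h5; apply: h2; by rewrite -h5.
    constructor 2; split => //.
    - by rewrite /hi fi h4.
    - by rewrite h1 h4.
    - by rewrite /y2 /hi /lo fi h4 /=; case: ltrP => /= h5; try lra.
    - by apply: dle.
  constructor 3; split.
    by rewrite /y2 /hi /lo fi /=; lra.
  by apply: nonfrac_val; [exact xi | exact: fb xi | rewrite fi].
have sE : s = if b then 1 else -1 by [].
have dE i : d i = if b then (if y i < 1/2 then y i else 1 - y i)
                else (if y i < 1/2 then 1/2 - y i else y i - 1/2) by [].
split.
- split.
  + move=> i xi; case: (cls i xi).
    * case=> _ /andP[h0 h1] -> hd.
      case: (boolP b) => [bb|/negbTE bb]; rewrite sE dE bb h1 in hd *;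
        apply/andP; split; lra.
    * case=> _ /andP[h0 h1] -> hd.
      have h1' : (y i < 1/2) = false by apply/negbTE; rewrite -leNgt; lra.
      case: (boolP b) => [bb|/negbTE bb]; rewrite sE dE bb h1' in hd *;
        apply/andP; split; lra.
    * by case=> -> _; apply: fb.
  + move=> i j uij; have := fe i j uij.
    move: (uij); rewrite /uncov_edge => /and3P[_ xi xj].
    case: (cls i xi) => [[_ /andP[a0 a1] -> ha]|[_ /andP[a0 a1] -> ha]|[-> ha]];
    case: (cls j xj) => [[_ /andP[b0 b1] -> hb]|[_ /andP[b0 b1] -> hb]|[-> hb]];
    (have a1' : (y i < 1/2) = false by apply/negbTE; rewrite -leNgt; lra) ||
      (have a1' : True by []);
    (have b1' : (y j < 1/2) = false by apply/negbTE; rewrite -leNgt; lra) ||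
      (have b1' : True by []);
    case: (boolP b) => [bb|/negbTE bb]; rewrite ?sE ?dE ?bb
      ?a1 ?b1 ?a1' ?b1' in ha hb *;
    try (case: ha => [ha|[ha|ha]]); try (case: hb => [hb|[hb|hb]]); lra.
- rewrite /lp_obj /y2.
  rewrite (eq_bigr (fun i => (w i)%:R * y i + s * del * ((w i)%:R * ((hi i)%:R - (lo i)%:R)))); last first.
    by move=> i _; rewrite mulrDr; congr (_ + _); rewrite mulrCA.
  rewrite big_split /= -mulr_sumr -/Wd.
  have : s * del * Wd <= 0.
    case: (boolP b) => [bb|bb]; rewrite sE ?bb ?(negbTE bb).
      by rewrite mul1r; apply: mulr_ge0_le0; [lra | by rewrite -bE].
    rewrite mulN1r mulNr oppr_le0; apply: mulr_ge0; first lra.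
    by move: bb; rewrite bE -ltNge => /ltW.
  lra.
- apply: proper_card; apply/properP; split.
    apply/fintype.subsetP => i; rewrite !inE => fi.
    apply: contraTT fi => nfi.
    rewrite /frac; have -> : y2 i = y i by rewrite /y2 /hi /lo (negbTE nfi) /= subrr mulr0 addr0.
    exact nfi.
  exists i0; rewrite !inE //.
  have xi0 : ~~ x i0 by move: fi0; rewrite /frac => /andP[].
  have hval : y2 i0 = 0 \/ y2 i0 = 1/2 \/ y2 i0 = 1.
    case: (cls i0 xi0) => [[_ /andP[h0 h1] -> _]|[_ /andP[h0 h1] -> _]|[-> //]];
    rewrite /del sE dE; case: (boolP b) => [bb|/negbTE bb]; rewrite ?bb;
    case: ifP => h; first [left; lra | right; left; lra | right; right; lra].
  rewrite /frac; case: hval => [->|[->|->]]; rewrite /= ?ltxx ?eqxx ?andbF //.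
Qed.

Lemma nofrac_half (x : bs n) (y : 'I_n -> R) : lp_feasible e x y ->
  #|[set i | frac x y i]| = 0%N -> halfint x y.
Proof.
move=> [fb _] /eqP; rewrite cards_eq0 => /eqP h i xi.
apply: nonfrac_val; [exact xi | exact: fb xi | apply/negP => fi].
 have : i \in [set i | frac x y i] by rewrite inE.
by rewrite h inE.
Qed.

Lemma round_lp (x : bs n) (y : 'I_n -> R) : lp_feasible e x y ->
  exists y', [/\ lp_feasible e x y', halfint x y' & lp_obj w x y' <= lp_obj w x y].
Proof.
move: (leqnn #|[set i | frac x y i]|); move: {2}#|_| => k.
elim: k y => [|k IH] y hk fy.
  exists y; split => //; apply: nofrac_half => //; by apply/eqP; rewrite -leqn0.
case: (posnP #|[set i | frac x y i]|) => h0.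
  exists y; split => //; exact: nofrac_half.
case: (round_step fy h0) => y2 [fy2 ob2 c2].
have hk2 : (#|[set i | frac x y2 i]| <= k)%N by rewrite -ltnS (leq_trans c2 hk).
case: (IH y2 hk2 fy2) => y' [f' h' o']; exists y'; split => //.
exact: le_trans o' ob2.
Qed.

Lemma feas_ext (x : bs n) (y1 y2 : 'I_n -> R) :
  (forall i, ~~ x i -> y1 i = y2 i) -> lp_feasible e x y1 -> lp_feasible e x y2.
Proof.
move=> h [fb fe]; split.
  by move=> i xi; rewrite -h //; apply: fb.
move=> i j u; move: (u) => /and3P[_ xi xj]; rewrite -!h //; exact: fe.
Qed.

Lemma obj_ext (x : bs n) (y1 y2 : 'I_n -> R) :
  (forall i, ~~ x i -> y1 i = y2 i) -> lp_obj w x y1 = lp_obj w x y2.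
Proof. by move=> h; apply: eq_bigr => i xi; rewrite h. Qed.

Definition enc (f : {ffun 'I_n -> 'I_3}) : 'I_n -> R := fun i => (f i)%:R / 2.

Lemma LP_attained (x : bs n) : exists ys, [/\ lp_feasible e x ys, halfint x ys,
  LP R e w x = lp_obj w x ys &
  forall y, lp_feasible e x y -> lp_obj w x ys <= lp_obj w x y].
Proof.
pose P (f : {ffun 'I_n -> 'I_3}) := `[< lp_feasible e x (enc f) >].
pose f0 : {ffun 'I_n -> 'I_3} := [ffun => inord 2].
have Pf0 : P f0.
  apply/asboolP; rewrite /enc; split => [i _|i j _]; rewrite !ffunE !inordK //.
    by apply/andP; split; lra.
  lra.
case: (arg_minP (fun f => lp_obj w x (enc f)) Pf0) => fs /asboolP Pfs Hmin.
have low y : lp_feasible e x y -> lp_obj w x (enc fs) <= lp_obj w x y.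
  move=> fy; case: (round_lp fy) => y' [f' h' o'].
  pose g : {ffun 'I_n -> 'I_3} :=
    [ffun i => if y' i == 0 then (inord 0 : 'I_3) else if y' i == 1/2 then inord 1 else inord 2].
  have eg : forall i, ~~ x i -> enc g i = y' i.
    move=> i xi; rewrite /enc ffunE.
    case: (h' i xi) => [->|[->|->]]; rewrite ?eqxx.
    - by rewrite inordK // mul0r.
    - have -> : (1/2 == 0 :> R) = false by apply/negbTE; lra.
      by rewrite inordK // mul1r.
    - have -> : (1 == 0 :> R) = false by apply/negbTE; lra.
      have -> : (1 == 1/2 :> R) = false by apply/negbTE; lra.
      rewrite inordK //; lra.
  have Pg : P g by apply/asboolP; apply: (feas_ext (y1 := y')) => // i xi; rewrite eg.
  apply: le_trans (Hmin g Pg) _.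
  by rewrite (obj_ext (y2 := y')).
exists (enc fs); split => //.
- move=> i _; rewrite /enc.
  have : (fs i < 3)%N by [].
  case: (nat_of_ord (fs i)) => [|[|[|m]]] // _.
  + by left; rewrite mul0r.
  + by right; left; rewrite mul1r.
  + by right; right; lra.
- rewrite /LP; apply/eqP; rewrite eq_le; apply/andP; split.
    apply: ge_inf; last by exists (enc fs).
    exists (lp_obj w x (enc fs)) => v [y [fy ->]]; exact: low.
  apply: lb_le_inf; first by exists (lp_obj w x (enc fs)), (enc fs).
  by move=> v [y [fy ->]]; exact: low.
Qed.

Definition flipb (x : bs n) (v : 'I_n) : bs n := [ffun i => if i == v then ~~ x i else x i].

Lemma cost_ge0 (x : bs n) : 0 <= cost R w x.
Proof. by apply: sumr_ge0 => i _; case: (x i). Qed.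

Lemma lift_feas (x : bs n) (y : 'I_n -> R) : lp_feasible e x y ->
  lp_feasible e (zero_bs n) (fun i => if x i then 1 else y i) /\
  lp_obj w (zero_bs n) (fun i => if x i then 1 else y i) = cost R w x + lp_obj w x y.
Proof.
move=> [fb fe]; split; first split.
- move=> i _; case xi: (x i); first by apply/andP; split; lra.
  by apply: fb; rewrite xi.
- move=> i j; rewrite /uncov_edge !ffunE /= andbT => eij.
  case xi: (x i); case xj: (x j).
  + lra.
  + by have := fb j (negbT xj) => /andP[h _]; lra.
  + by have := fb i (negbT xi) => /andP[h _]; lra.
  + by apply: fe; rewrite /uncov_edge eij xi xj.
- rewrite /lp_obj /cost.
  rewrite (eq_bigl predT); last by move=> i; rewrite ffunE.
  rewrite [\sum_(i < n | ~~ x i) _]big_mkcond /= -big_split /=.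
  by apply: eq_bigr => i _; case: (x i); rewrite /= ?mulr1 ?add0r ?addr0.
Qed.

Lemma f1_ge (x : bs n) : LP R e w (zero_bs n) <= cost R w x + LP R e w x.
Proof.
case: (LP_attained x) => ys [fs _ -> _].
case: (LP_attained (zero_bs n)) => y0 [_ _ -> m0].
case: (lift_feas fs) => fz oz; rewrite -oz; exact: m0.
Qed.

Lemma prop1_zero : prop1 R e w (zero_bs n).
Proof.
rewrite /prop1; have -> : cost R w (zero_bs n) = 0.
  by rewrite /cost big1 // => i _; rewrite ffunE.
by rewrite subr0.
Qed.

Lemma flip_sumn (x : bs n) v (F : 'I_n -> R) : ~~ x v ->
  \sum_(i < n | ~~ x i) F i = F v + \sum_(i < n | ~~ flipb x v i) F i.
Proof.
move=> xv; rewrite (bigD1 v) //=; congr (_ + _); apply: eq_bigl => i.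
by rewrite /flipb ffunE; case: eqP => [->|_]; rewrite ?xv ?negbK ?andbT ?andbF.
Qed.

Lemma flip_cost (x : bs n) v : ~~ x v ->
  cost R w (flipb x v) = cost R w x + (w v)%:R.
Proof.
move=> xv; rewrite /cost (bigD1 v) //= [X in _ = X + _](bigD1 v) //=.
rewrite /flipb ffunE eqxx (negbTE xv) /= add0r addrC; congr (_ + _).
by apply: eq_bigr => i iv; rewrite ffunE (negbTE iv).
Qed.

Lemma key_lemma (x : bs n) : prop1 R e w x -> ~ prop2 R e w x ->
  exists v, ~~ x v /\ prop1 R e w (flipb x v).
Proof.
move=> p1 np2.
case: (LP_attained x) => ys [fs hs Ls ms].
case: (boolP [exists v, ~~ x v && (ys v == 1)]).
  case/existsP => v /andP[xv /eqP yv]; exists v; split => //.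
  have fs' : lp_feasible e (flipb x v) ys.
    case: fs => fb fe; split.
      move=> i; rewrite /flipb ffunE; case: eqP => [->|_]; first by rewrite xv.
      exact: fb.
    move=> i j; rewrite /uncov_edge /flipb !ffunE.
    case: eqP => [->|_]; first by rewrite xv andbF.
    case: eqP => [->|_]; first by rewrite xv !andbF.
    move=> u; exact: fe.
  case: (LP_attained (flipb x v)) => y2 [_ _ L2 m2].
  have hle := m2 _ fs'.
  have ho : lp_obj w x ys = (w v)%:R + lp_obj w (flipb x v) ys.
    by rewrite /lp_obj (flip_sumn _ xv) yv mulr1.
  have hc := flip_cost xv.
  have hg := f1_ge (flipb x v).
  move: p1; rewrite /prop1 => p1.
  apply/eqP; rewrite eq_le; apply/andP; split; lra.
rewrite negb_exists => /forallP hn.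
exfalso; apply: np2; exists ys; split => //.
move=> i xi /existsP [j u].
have xj : ~~ x j by move: u => /and3P[].
have := (proj2 fs) i j u.
have hi : ys i <> 1 by move=> h; have := hn i; rewrite xi h eqxx.
have hj : ys j <> 1 by move=> h; have := hn j; rewrite xj h eqxx.
case: (hs i xi) => [->|[->|]] //; case: (hs j xj) => [->|[->|]] //; lra.
Qed.
End LPth.


Section EA.
Variables (R : realType) (n : nat) (e : rel 'I_n) (w : 'I_n -> nat).
Variables (pick1 pick2 : {set bs n} -> bs n).
Hypothesis hp1 : argmin_picker (f1 R e w) pick1.
Hypothesis hp2 : argmin_picker (f2 R e w) pick2.

Notation st := (step pick1 pick2).
Notation P1 := (prop1 R e w).

Lemma prop1_f1 (y : bs n) : P1 y <-> f1 R e w y = LP R e w (zero_bs n).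
Proof. rewrite /prop1 /f1; split => h; lra. Qed.

Definition Psel (Q : {set bs n}) (x' : bs n) : {set bs n} :=
  finset.finset (fun y => (y \in x' |: Q) && (ones y == ones x')).

Lemma Psel_x' Q x' : x' \in Psel Q x'.
Proof. by rewrite inE setU11 eqxx. Qed.

Lemma Psel_ne Q x' : Psel Q x' != finset.set0.
Proof. by apply/set0Pn; exists x'; exact: Psel_x'. Qed.

Lemma stepE Q x' : st Q x' = ((x' |: Q) :\: Psel Q x') :|: [set pick1 (Psel Q x'); pick2 (Psel Q x')].
Proof. by []. Qed.

Lemma pick1_in Q x' : pick1 (Psel Q x') \in Psel Q x'.
Proof. exact: (proj1 (hp1 (Psel_ne Q x'))). Qed.
Lemma pick2_in Q x' : pick2 (Psel Q x') \in Psel Q x'.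
Proof. exact: (proj1 (hp2 (Psel_ne Q x'))). Qed.

Lemma step_sub Q x' : st Q x' \subset x' |: Q.
Proof.
apply/fintype.subsetP => y; rewrite stepE finset.in_setU finset.in_setD.
case/orP => [/andP[_ ->]//|]; rewrite !inE => /orP[]/eqP->.
  by have := pick1_in Q x'; rewrite !inE => /andP[].
by have := pick2_in Q x'; rewrite !inE => /andP[].
Qed.

Lemma step_lvl Q x' y : y \in x' |: Q -> exists2 z, z \in st Q x' & ones z = ones y.
Proof.
move=> yin; case: (boolP (ones y == ones x')) => h.
  exists (pick1 (Psel Q x')); first by rewrite stepE !inE eqxx orbT.
  have := pick1_in Q x'; rewrite inE => /andP[_ /eqP ->]; exact/esym/eqP.
exists y => //; rewrite stepE finset.in_setU finset.in_setD yin andbT.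
by rewrite inE yin (negbTE h).
Qed.

Lemma step_prop1 Q x' y : y \in x' |: Q -> P1 y ->
  exists z, [/\ z \in st Q x', ones z = ones y & P1 z].
Proof.
move=> yin py; case: (boolP (ones y == ones x')) => h.
  exists (pick1 (Psel Q x')); split.
  - by rewrite stepE !inE eqxx orbT.
  - have := pick1_in Q x'; rewrite inE => /andP[_ /eqP ->]; exact/esym/eqP.
  - apply/prop1_f1.
    have yP : y \in Psel Q x' by rewrite inE yin h.
    have := (proj2 (hp1 (Psel_ne Q x'))) y yP.
    move/prop1_f1: py => ->.
    have := f1_ge R e w (pick1 (Psel Q x')); rewrite /f1 => h1 h2.
    apply/eqP; rewrite eq_le h2 h1 //.
exists y; split => //; rewrite stepE finset.in_setU finset.in_setD yin andbT.
by rewrite inE yin (negbTE h).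
Qed.

Definition lvl (k : nat) (Q : {set bs n}) := [set y in Q | ones y == k].
Definition popinv (Q : {set bs n}) := Q != finset.set0 /\ forall k, (#|lvl k Q| <= 2)%N.

Lemma step_ne Q x' : st Q x' != finset.set0.
Proof. by apply/set0Pn; exists (pick1 (Psel Q x')); rewrite stepE !inE eqxx orbT. Qed.

Lemma step_inv Q x' : popinv Q -> popinv (st Q x').
Proof.
move=> [_ hQ]; split; first exact: step_ne.
move=> k; case: (eqVneq k (ones x')) => [->|hk].
  apply: (@leq_trans #|[set pick1 (Psel Q x'); pick2 (Psel Q x')]|); last first.
    by rewrite cards2; case: (_ != _).
  apply: subset_leq_card; apply/fintype.subsetP => y; rewrite !inE => /andP[].
  case/orP => [/andP[/negP h1 h2] h3|//].
  by exfalso; apply: h1; rewrite h2 h3.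
apply: leq_trans (hQ k); apply: subset_leq_card; apply/fintype.subsetP => y.
rewrite !inE => /andP[+ /eqP hy]; case/orP => [/andP[_]|].
  move=> /orP[/eqP yx|yQ]; first by move: hk; rewrite -hy yx eqxx.
  by rewrite yQ hy eqxx.
case/orP => /eqP yp.
  have := pick1_in Q x'; rewrite !inE => /andP[_ /eqP h].
  by move: hk; rewrite -hy yp h eqxx.
have := pick2_in Q x'; rewrite !inE => /andP[_ /eqP h].
by move: hk; rewrite -hy yp h eqxx.
Qed.


Lemma ones_le (y : bs n) : (ones y <= n)%N.
Proof.
rewrite /ones -[n in (_ <= n)%N]card_ord -sum1_card.
by apply: leq_sum => i _; exact: leq_b1.
Qed.

Lemma ones_flip (x : bs n) v : (ones (flipb x v) + x v = ones x + ~~ x v)%N.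
Proof.
rewrite /ones (bigD1 v) //= [X in _ = (X + _)%N](bigD1 v) //= /flipb ffunE eqxx.
rewrite (eq_bigr (fun i => (x i : nat))); last by move=> i iv; rewrite ffunE (negbTE iv).
by case: (x v) => /=; rewrite ?add0n ?addn0 ?addn1 ?add1n ?addnS.
Qed.

Lemma ones0 (y : bs n) : ones y = 0%N -> y = zero_bs n.
Proof.
move=> h; apply/ffunP => i; rewrite ffunE; apply/negbTE/negP => yi.
by move: h; rewrite /ones (bigD1 i) //= yi.
Qed.

Definition m1 (Q : {set bs n}) := (\max_(y in Q | `[< P1 y >]) (ones y).+1)%N.
Definition mu (Q : {set bs n}) := (\max_(y in Q) (n - ones y))%N.
Definition Phi (Q : {set bs n}) :=
  if (0 < m1 Q)%N then (n.+1 + m1 Q)%N else mu Q.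

Lemma m1_le Q : (m1 Q <= n.+1)%N.
Proof. by apply/bigmax_leqP => y _; rewrite ltnS ones_le. Qed.

Lemma mu_le Q : (mu Q <= n)%N.
Proof. by apply/bigmax_leqP => y _; rewrite leq_subr. Qed.

Lemma Phi_le Q : (Phi Q <= 2 * n + 2)%N.
Proof.
rewrite /Phi; have h1 := m1_le Q; have h2 := mu_le Q.
case: ifP => _; lia.
Qed.

Lemma m1_step Q x' y : y \in x' |: Q -> P1 y -> ((ones y).+1 <= m1 (st Q x'))%N.
Proof.
move=> yin py; case: (step_prop1 yin py) => z [zin hz pz].
rewrite -hz; apply: (leq_bigmax_cond (F := fun y => (ones y).+1)).
by rewrite zin; apply/asboolP.
Qed.

Lemma mu_step Q x' y : y \in x' |: Q -> (n - ones y <= mu (st Q x'))%N.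
Proof.
move=> yin; case: (step_lvl yin) => z zin hz.
rewrite -hz; exact: (leq_bigmax_cond (F := fun y => n - ones y)%N).
Qed.

Lemma Phi_mono Q x' : (Phi Q <= Phi (st Q x'))%N.
Proof.
have hm1 : (m1 Q <= m1 (st Q x'))%N.
  apply/bigmax_leqP => y /andP[yQ /asboolP py].
  by apply: m1_step => //; rewrite finset.in_setU yQ orbT.
have hmu : (mu Q <= mu (st Q x'))%N.
  apply/bigmax_leqP => y yQ.
  by apply: mu_step => //; rewrite finset.in_setU yQ orbT.
have := mu_le Q; have := mu_le (st Q x').
rewrite /Phi; case: ifP => h1; case: ifP => h2; lia.
Qed.

Lemma Phi_up1 Q x' y : (0 < m1 Q)%N -> y \in x' |: Q -> P1 y -> (m1 Q < (ones y).+1)%N ->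
  (Phi Q < Phi (st Q x'))%N.
Proof.
move=> h0 yin py hy; have := m1_step yin py.
rewrite /Phi h0; case: ifP => h1; lia.
Qed.

Lemma Phi_up2 Q x' : m1 Q = 0%N -> (mu Q < n - ones x')%N ->
  (Phi Q < Phi (st Q x'))%N.
Proof.
move=> h0 hy.
have := mu_step (Q := Q) (setU11 x' Q); have := mu_le Q.
rewrite /Phi h0 /=; case: ifP => h1; lia.
Qed.

Lemma progress Q : Q != finset.set0 -> ~ target R e w Q ->
  exists x v, x \in Q /\ (Phi Q < Phi (st Q (flipb x v)))%N.
Proof.
move=> Qne ntg.
case: (posnP (m1 Q)) => hm; last first.
  have : exists y, (y \in Q) && `[< P1 y >].
    apply/existsP; apply: contraTT hm; rewrite negb_exists => /forallP hn.
    rewrite -leqNgt leqn0; apply/eqP/eqP; rewrite -leqn0.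
    by apply/bigmax_leqP => y hy; have := hn y; rewrite hy.
  case=> y0 hy0.
  have cA : (0 < #|[pred y in Q | `[< P1 y >]]|)%N.
    by apply/card_gt0P; exists y0; rewrite inE.
  case: (eq_bigmax_cond (fun y => (ones y).+1) cA) => x xA hx.
  move: xA; rewrite inE => /andP[xQ /asboolP px].
  have np2 : ~ prop2 R e w x by move=> p2; apply: ntg; exists x.
  case: (key_lemma px np2) => v [xv pv].
  exists x, v; split => //.
  apply: (Phi_up1 hm (y := flipb x v)) => //; first exact: setU11.
  have := ones_flip x v; rewrite (negbTE xv) /= => ho.
  by rewrite /m1 hx; lia.
have cQ : (0 < #|Q|)%N by rewrite card_gt0.
case: (eq_bigmax_cond (fun y => n - ones y)%N cQ) => x xQ hx.
have ox : (0 < ones x)%N.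
  rewrite lt0n; apply/negP => /eqP /ones0 x0.
  have : (1 <= m1 Q)%N.
    apply: (@leq_trans (ones x).+1) => //; apply: (leq_bigmax_cond (F := fun y => (ones y).+1)).
    by rewrite xQ; apply/asboolP; rewrite x0; exact: prop1_zero.
  by rewrite hm.
have [v xv] : exists v, x v.
  apply/existsP; apply: contraTT ox; rewrite negb_exists => /forallP hn.
  rewrite -leqNgt leqn0; apply/eqP.
  by rewrite /ones big1 // => i _; rewrite (negbTE (hn i)).
exists x, v; split => //.
apply: Phi_up2 => //.
have := ones_flip x v; rewrite xv /= => ho.
have := ones_le x.
rewrite /mu hx; lia.
Qed.
End EA.


Section Mut.
Variables (R : realType) (n : nat) (e : rel 'I_n).
Hypothesis n1 : (1 <= n)%N.

Lemma invn_ge0 : 0 <= 1 / n%:R :> R.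
Proof. by rewrite mul1r invr_ge0 ler0n. Qed.

Lemma invn_le1 : 1 / n%:R <= 1 :> R.
Proof. by rewrite mul1r invf_le1 // ?ler1n // ltr0n. Qed.

Lemma bitprob_ge0 (p : R) b : 0 <= p <= 1 -> 0 <= bitprob p b.
Proof. by case/andP => h0 h1; rewrite /bitprob; case: b; lra. Qed.

Lemma flip_p01 (x : bs n) i : 0 <= flip_p R e x i <= 1.
Proof.
have h0 := invn_ge0; have h1 := invn_le1.
by rewrite /flip_p; case: ifP => _; apply/andP; split; lra.
Qed.

Lemma sum_bool (F : bool -> R) : \sum_(b : bool) F b = F true + F false.
Proof.
rewrite (bigD1 true) //=; congr (_ + _).
by rewrite (big_pred1 false) // => b; case: b.
Qed.

Lemma prod_sum (p : 'I_n -> R) (x : bs n) :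
  \sum_(x' : bs n) \prod_(i < n) bitprob (p i) (x i != x' i) = 1.
Proof.
rewrite -(bigA_distr_bigA (fun i b => bitprob (p i) (x i != b))) /=.
rewrite big1 // => i _; rewrite sum_bool /bitprob.
by case: (x i) => /=; lra.
Qed.

Lemma mut_ge0 (x x' : bs n) : 0 <= mut_prob R e x x'.
Proof.
rewrite /mut_prob; apply: addr_ge0; apply: mulr_ge0; try lra;
  apply: prodr_ge0 => i _; apply: bitprob_ge0.
  exact: flip_p01.
by rewrite invn_ge0 invn_le1.
Qed.

Lemma mut_sum (x : bs n) : \sum_(x' : bs n) mut_prob R e x x' = 1.
Proof.
rewrite /mut_prob big_split /= -!mulr_sumr !prod_sum; lra.
Qed.

Lemma bernoulli (p : R) k : 0 <= p <= 1 -> 1 - k%:R * p <= (1 - p) ^+ k.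
Proof.
case/andP => h0 h1; elim: k => [|k IH]; first by rewrite mul0r subr0 expr0.
rewrite exprS.
have h2 : (1 - k%:R * p) * (1 - p) <= (1 - p) * (1 - p) ^+ k.
  by rewrite mulrC ler_wpM2l //; lra.
apply: le_trans h2; rewrite -natr1.
have : 0 <= k%:R * p * p by apply: mulr_ge0 => //; apply: mulr_ge0.
lra.
Qed.

Lemma quarter : 1/4 <= (1 - 1 / n%:R) ^+ n.-1 :> R.
Proof.
set a := ((n.-1) %/ 2)%N.
set b := (n.-1 - a)%N.
have hab : (n.-1 = a + b)%N by rewrite /b /a; lia.
have ha : (2 * a <= n)%N by rewrite /a; lia.
have hb : (2 * b <= n)%N by rewrite /b /a; lia.
have p01 : 0 <= (1 / n%:R : R) <= 1 by rewrite invn_ge0 invn_le1.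
rewrite hab exprD.
have npos : 0 < n%:R :> R by rewrite ltr0n.
have key_lemma k : (2 * k <= n)%N -> 1/2 <= 1 - k%:R * (1 / n%:R) :> R.
  move=> hk; have : (2 * k)%:R <= n%:R :> R by rewrite ler_nat.
  rewrite natrM mul1r => hk'.
  have ht : n%:R * n%:R^-1 = 1 :> R by rewrite mulfV // gt_eqF.
  have : 0 <= n%:R^-1 :> R by rewrite invr_ge0 ler0n.
  nra.
have := bernoulli a p01; have := bernoulli b p01.
have := key_lemma a ha; have := key_lemma b hb.
move=> k1 k2 b1 b2.
have e1 : 1/2 <= (1 - 1 / n%:R) ^+ b :> R by lra.
have e2 : 1/2 <= (1 - 1 / n%:R) ^+ a :> R by lra.
have : (1/2) * (1/2) <= (1 - 1 / n%:R) ^+ a * (1 - 1 / n%:R) ^+ b :> R.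
  by apply: ler_pM => //; lra.
lra.
Qed.

Lemma mut_flip (x : bs n) v : 1 / (8 * n%:R) <= mut_prob R e x (flipb x v).
Proof.
rewrite /mut_prob.
have h1 : 0 <= 1 / 2 * \prod_(i < n) bitprob (flip_p R e x i) (x i != flipb x v i).
  apply: mulr_ge0; first lra.
  by apply: prodr_ge0 => i _; apply: bitprob_ge0; exact: flip_p01.
suff h2 : (1 / (8 * n%:R) : R) <= 1 / 2 * \prod_(i < n) bitprob (1 / n%:R) (x i != flipb x v i) by lra.
rewrite (bigD1 v) //= /flipb ffunE eqxx.
have -> : (x v != ~~ x v) = true by case: (x v).
rewrite (eq_bigr (fun _ => 1 - 1 / n%:R)); last first.
  by move=> i iv; rewrite ffunE (negbTE iv) eqxx.
rewrite prodr_const cardC1 card_ord /bitprob.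
have q := quarter.
have npos : 0 < n%:R :> R by rewrite ltr0n.
have -> : 1 / (8 * n%:R) = 1 / 2 * (1 / n%:R * (1/4)) :> R.
  by field; rewrite (gt_eqF npos).
apply: ler_wpM2l; first lra.
apply: ler_wpM2l => //; exact: invn_ge0.
Qed.

End Mut.


Section Main.
Variables (R : realType) (n : nat) (e : rel 'I_n) (w : 'I_n -> nat).
Variables (pick1 pick2 : {set bs n} -> bs n).
Hypothesis hp1 : argmin_picker (f1 R e w) pick1.
Hypothesis hp2 : argmin_picker (f2 R e w) pick2.
Hypothesis n1 : (1 <= n)%N.

Notation st := (step pick1 pick2).
Notation mut := (mut_prob R e).
Notation tr := (trans R e pick1 pick2).

Lemma card_inv (Q : {set bs n}) : popinv Q -> (#|Q| <= 2 * n.+1)%N.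
Proof.
move=> [_ hQ].
rewrite -sum1_card (partition_big (fun y => (inord (ones y) : 'I_n.+1)) predT) //=.
apply: leq_trans (_ : \sum_(k < n.+1) 2 <= _)%N; last by rewrite sum_nat_const card_ord mulnC.
apply: leq_sum => k _; rewrite sum1_card.
apply: leq_trans (hQ k); apply: subset_leq_card; apply/fintype.subsetP => y.
rewrite !inE => /andP[yQ /eqP hk]; rewrite yQ /=.
by rewrite -hk inordK // ltnS ones_le.
Qed.

Lemma trans_V (Q : {set bs n}) (Vf : {set bs n} -> R) :
  \sum_P tr Q P * Vf P =
  \sum_(x in Q) \sum_(x' : bs n) (#|Q|%:R)^-1 * mut x x' * Vf (st Q x').
Proof.
rewrite /trans.
under eq_bigr do rewrite mulr_suml.
rewrite exchange_big /=; apply: eq_bigr => x _.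
under eq_bigr do rewrite mulr_suml.
rewrite exchange_big /=; apply: eq_bigr => x' _.
rewrite (bigD1 (st Q x')) //= eqxx mulr1 big1 ?addr0 // => P hP.
by rewrite eq_sym (negbTE hP) mulr0 mul0r.
Qed.

Definition Kc : R := (16 * n * n.+1)%:R.
Definition Mc := (2 * n + 2)%N.
Definition Vf (Q : {set bs n}) : R := Kc * (Mc - Phi R e w Q)%:R.

Lemma V_ge0 Q : 0 <= Vf Q.
Proof. by rewrite /Vf /Kc mulr_ge0 // ler0n. Qed.

Lemma V_le Q : Vf Q <= Kc * Mc%:R.
Proof. by rewrite /Vf ler_wpM2l ?ler0n // ler_nat leq_subr. Qed.

Lemma drift (Q : {set bs n}) : popinv Q -> ~ target R e w Q ->
  \sum_P tr Q P * Vf P <= Vf Q - 1.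
Proof.
move=> iQ ntg; have Qne := proj1 iQ.
case: (progress pick2 hp1 Qne ntg) => x0 [v [x0Q hup]].
set x0' := flipb x0 v.
rewrite trans_V.
pose a x x' : R := (#|Q|%:R)^-1 * mut x x'.
have cQ : (0 < #|Q|)%N by rewrite card_gt0.
have cQR : 0 < #|Q|%:R :> R by rewrite ltr0n.
have a_ge0 x x' : 0 <= a x x'.
  by apply: mulr_ge0; [rewrite invr_ge0 ler0n | exact: mut_ge0].
have Kge0 : 0 <= Kc by rewrite ler0n.
have Vm x' : Vf (st Q x') <= Vf Q.
  rewrite /Vf ler_wpM2l // ler_nat; have := Phi_mono pick2 hp1 Q x'; lia.
have Vu : Vf (st Q x0') <= Vf Q - Kc.
  rewrite /Vf; have := Phi_le R e w (st Q x0'); rewrite -/Mc => hl.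
  have -> : (Mc - Phi R e w Q)%N = ((Mc - Phi R e w (st Q x0')) + 1 +
               (Phi R e w (st Q x0') - Phi R e w Q - 1))%N  by rewrite /Mc /x0' in hl *; lia.
  rewrite !natrD mulrDr mulrDr mulr1.
  have : 0 <= Kc * ((Phi R e w (st Q x0') - Phi R e w Q - 1))%:R by rewrite mulr_ge0 // ler0n.
  lra.
pose g x x' : R := a x x' * Vf Q - (if (x == x0) && (x' == x0') then a x x' * Kc else 0).
apply: (@le_trans _ _ (\sum_(x in Q) \sum_(x' : bs n) g x x')).
  apply: ler_sum => x _; apply: ler_sum => x' _; rewrite /g.
  case: ifP => [/andP[/eqP -> /eqP ->]|_].
    rewrite -mulrBr; apply: ler_wpM2l; [exact: a_ge0 | exact: Vu].
  rewrite subr0; apply: ler_wpM2l; [exact: a_ge0 | exact: Vm].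
have sa : \sum_(x in Q) \sum_(x' : bs n) a x x' = 1.
  rewrite (eq_bigr (fun _ => (#|Q|%:R)^-1)); last first.
    by move=> x _; rewrite /a -mulr_sumr mut_sum // mulr1.
  by rewrite sumr_const -[X in X = 1]mulr_natr mulVf // gt_eqF.
have sb : \sum_(x in Q) \sum_(x' : bs n)
     (if (x == x0) && (x' == x0') then a x x' * Kc else 0) = a x0 x0' * Kc.
  rewrite (bigD1 x0) //= (bigD1 x0') //= !eqxx /= big1 ?addr0; last first.
    by move=> x' hx'; rewrite (negbTE hx').
  rewrite big1 ?addr0 // => x hx; rewrite big1 // => x' _; by move: hx => /andP[_ hx]; rewrite (negbTE hx).
rewrite /g; under eq_bigr do rewrite sumrB.
rewrite sumrB.
under eq_bigr do rewrite -mulr_suml.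
rewrite -mulr_suml sa mul1r sb.
suff : 1 <= a x0 x0' * Kc by lra.
have hm := mut_flip R e n1 x0 v.
have hc := card_inv iQ.
have hcR : #|Q|%:R <= (2 * n.+1)%:R :> R by rewrite ler_nat.
rewrite /a /Kc -/x0'.
have npos : 0 < n%:R :> R by rewrite ltr0n.
set q := #|Q|%:R in cQR hcR *.
set m := mut x0 x0' in hm *.
have h8 : 0 < 8 * n%:R :> R by lra.
have hm' : 1 <= m * (8 * n%:R).
  move: hm; rewrite mul1r -(ler_pM2r h8) mulVf //; exact: lt0r_neq0.
have h2 : 1 <= (2 * n.+1)%:R / q.
  by rewrite ler_pdivlMr // mul1r.
have -> : q^-1 * m * (16 * n * n.+1)%:R = (m * (8 * n%:R)) * ((2 * n.+1)%:R / q).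
  rewrite !natrM; ring.
have : 1 * 1 <= (m * (8 * n%:R)) * ((2 * n.+1)%:R / q).
  by apply: ler_pM => //; lra.
lra.
Qed.

End Main.


Section Surv.
Variables (R : realType) (n : nat) (e : rel 'I_n) (w : 'I_n -> nat).
Variables (pick1 pick2 : {set bs n} -> bs n).
Hypothesis hp1 : argmin_picker (f1 R e w) pick1.
Hypothesis hp2 : argmin_picker (f2 R e w) pick2.
Hypothesis n1 : (1 <= n)%N.

Notation st := (step pick1 pick2).
Notation tr := (trans R e pick1 pick2).
Notation sv := (surv R e w pick1 pick2).
Notation VV := (Vf R e w).
Notation KK := (Kc R n).

Lemma init_ge0 (P : {set bs n}) : 0 <= init R P.
Proof.
by apply: sumr_ge0 => x _; apply: mulr_ge0; rewrite ?invr_ge0 ler0n.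
Qed.

Lemma tr_ge0 (Q P : {set bs n}) : 0 <= tr Q P.
Proof.
apply: sumr_ge0 => x _; apply: sumr_ge0 => x' _; apply: mulr_ge0; last exact: ler0n.
by apply: mulr_ge0; [rewrite invr_ge0 ler0n | exact: mut_ge0].
Qed.

Lemma sv0 (P : {set bs n}) : sv 0 P = if `[< target R e w P >] then 0 else init R P.
Proof. by []. Qed.
Lemma svS t (P : {set bs n}) : sv t.+1 P =
  if `[< target R e w P >] then 0 else \sum_(Q : {set bs n}) sv t Q * tr Q P.
Proof. by []. Qed.

Lemma sv_ge0 t (P : {set bs n}) : 0 <= sv t P.
Proof.
elim: t P => [|t IH] P; first by rewrite sv0; case: ifP => _ //; exact: init_ge0.
rewrite svS; case: ifP => _ //.
by apply: sumr_ge0 => Q _; apply: mulr_ge0 => //; exact: tr_ge0.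
Qed.

Lemma sv_target t (P : {set bs n}) : target R e w P -> sv t P = 0.
Proof. by move=> h; case: t => [|t]; rewrite ?sv0 ?svS asboolT. Qed.

Lemma sum_nz (T : finType) (A : pred T) (F : T -> R) :
  \sum_(i in A) F i != 0 -> exists i, i \in A /\ F i != 0.
Proof.
move=> h; case: (boolP [exists i, (i \in A) && (F i != 0)]).
  by case/existsP => i /andP[]; exists i.
rewrite negb_exists => /forallP hn; exfalso; move/negP: h; apply.
apply/eqP; apply: big1 => i iA; have := hn i; rewrite iA /= negbK => /eqP.
by [].
Qed.

Lemma sv_inv t (P : {set bs n}) : sv t P != 0 -> popinv P.
Proof.
elim: t P => [|t IH] P.
  rewrite sv0; case: ifP => _; first by rewrite eqxx.
  rewrite /init => /sum_nz [x [_ hx]].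
  have : P == [set x] by apply: contraNT hx => /negbTE ->; rewrite mulr0.
  move/eqP => ->; split; first by apply/set0Pn; exists x; rewrite inE.
  move=> k; apply: leq_trans (_ : #|[set x]| <= 2)%N; last by rewrite cards1.
  by apply: subset_leq_card; apply/fintype.subsetP => y; rewrite !inE => /andP[].
rewrite svS; case: ifP => _; first by rewrite eqxx.
move/sum_nz => [Q [_ hQ]].
have hs : sv t Q != 0 by apply: contraNneq hQ => ->; rewrite mul0r.
have ht : tr Q P != 0 by apply: contraNneq hQ => ->; rewrite mulr0.
move: ht; rewrite /trans => /sum_nz [x [_ /sum_nz [x' [_ hx']]]].
have : st Q x' == P by apply: contraNT hx' => /negbTE ->; rewrite mulr0.
move/eqP => <-; apply: (step_inv hp1 hp2); exact: IH hs.
Qed.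

Definition Dsum t := \sum_(P : {set bs n}) sv t P * VV P.
Definition Ssum t := \sum_(P : {set bs n}) sv t P.

Lemma D_step t : Dsum t.+1 <= Dsum t - Ssum t.
Proof.
rewrite /Dsum /Ssum.
apply: (@le_trans _ _ (\sum_P (\sum_(Q : {set bs n}) sv t Q * tr Q P) * VV P)).
  apply: ler_sum => P _; apply: ler_wpM2r; first exact: V_ge0.
  rewrite svS; case: ifP => _ //.
  by apply: sumr_ge0 => Q _; apply: mulr_ge0; [exact: sv_ge0 | exact: tr_ge0].
under eq_bigr do rewrite mulr_suml.
rewrite exchange_big /=.
under eq_bigr do (under eq_bigr do rewrite -mulrA; rewrite -mulr_sumr).
rewrite -sumrB; apply: ler_sum => Q _.
have -> : sv t Q * VV Q - sv t Q = sv t Q * (VV Q - 1) by rewrite mulrBr mulr1.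
case: (eqVneq (sv t Q) 0) => [->|hs]; first by rewrite !mul0r.
apply: ler_wpM2l; first exact: sv_ge0.
apply: (drift pick2 hp1 n1 (sv_inv hs)).
by move=> tg; move: hs; rewrite sv_target // eqxx.
Qed.

Lemma init_sum : \sum_(P : {set bs n}) init R P = 1.
Proof.
rewrite /init exchange_big /=.
rewrite (eq_bigr (fun _ => (2 ^ n)%:R^-1)); last first.
  move=> x _; rewrite -mulr_sumr (bigD1 [set x]) //= eqxx /= mulr1n.
  rewrite big1 ?addr0 ?mulr1 // => P hP; by rewrite (negbTE hP).
rewrite sumr_const card_ffun card_bool card_ord.
rewrite -[X in X = 1]mulr_natr mulVf //.
by rewrite pnatr_eq0 expn_eq0.
Qed.

Lemma D0_le : Dsum 0 <= KK * (Mc n)%:R.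
Proof.
rewrite /Dsum; apply: (@le_trans _ _ (\sum_P init R P * (KK * (Mc n)%:R))).
  apply: ler_sum => P _; apply: ler_pM; [exact: sv_ge0 | exact: V_ge0 | | exact: V_le].
  by rewrite sv0; case: ifP => _ //; exact: init_ge0.
by rewrite -mulr_suml init_sum mul1r.
Qed.

Lemma D_ge0 t : 0 <= Dsum t.
Proof. by apply: sumr_ge0 => P _; apply: mulr_ge0; [exact: sv_ge0 | exact: V_ge0]. Qed.

Lemma sum_S N : \sum_(t < N) Ssum t + Dsum N <= Dsum 0.
Proof.
elim: N => [|N IH]; first by rewrite big_ord0 add0r.
rewrite big_ord_recr /=; have := D_step N; lra.
Qed.

Lemma pet_le N : partial_exp_time R e w pick1 pick2 N <= KK * (Mc n)%:R.
Proof.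
have := sum_S N; have := D_ge0 N; have := D0_le.
rewrite /partial_exp_time -/Ssum; lra.
Qed.

End Surv.

Theorem lemma10 :
  exists (c n0 : nat),
  forall (R : realType) (n : nat) (e : rel 'I_n) (w : 'I_n -> nat)
         (pick1 pick2 : {set bs n} -> bs n),
    (n0 <= n)%N ->
    symmetric e -> irreflexive e ->
    (forall i, (0 < w i)%N) ->
    argmin_picker (@f1 R n e w) pick1 ->
    argmin_picker (@f2 R n e w) pick2 ->
    forall N : nat,
      @partial_exp_time R n e w pick1 pick2 N <= (c * n ^ 3)%:R :> R.
Proof.
exists 128%N, 1%N => R n e w pick1 pick2 hn _ _ _ hp1 hp2 N.
apply: le_trans (pet_le hp1 hp2 hn N) _.
rewrite /Kc /Mc -natrM ler_nat.
have h : (n.+1 <= 2 * n)%N by lia.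
rewrite expnS expnS expn1.
nia.
Qed.
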